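(* For every sufficiently large positive integer $C$ the following holds. Let $l_n=(n+C)^3$ for $n\in\{0,1,2,\dots\}$, and let $G=(V,E)$ be the comb graph with vertex set $V=\{(n,l)\in\mathbb{N}_0\times\mathbb{N}_0:\ l\le l_n\}$ and edges $(n,0)\sim(n+1,0)$ and $(n,l)\sim(n,l+1)$ (for all admissible $n,l$). Let $f(n,0)=1/l_n$ and $f(n,l)=0$ for $0<l<l_n$. Define $v:V\to\mathbb{R}$ by $v(0,0)=l_0\sum_{k=0}^\infty \frac1{l_k}$, $v(n,0)=v(n-1,0)+\sum_{k=n}^\infty\frac1{l_k}$ for $n\ge1$, and $v(n,l)=\frac{l_n-l}{l_n}v(n,0)$. Then $v$ is a bounded solution of \[ \begin{cases}\Delta_\infty v(n,l)=-f(n,l), & l<l_n,\\ v(n,l)=0, & l=l_n.\end{cases} \]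
   Context: $\mathbb{N}_0=\{0,1,2,\dots\}$. The discrete infinity Laplacian of $w:V\to\mathbb{R}$ is $\Delta_\infty w(x)=\inf_{y\sim x}w(y)+\sup_{y\sim x}w(y)-2w(x)$, where $y\sim x$ means $\{x,y\}\in E$. *)

(* Defs.v *)
From HB Require Import structures.
From mathcomp Require Import all_boot all_order all_algebra.
From mathcomp Require Import all_classical all_reals all_analysis.
Unset Printing Implicit Defensive.
Import Order.TTheory GRing.Theory Num.Theory.
Local Open Scope classical_set_scope.
Local Open Scope ring_scope.

Definition lcomb (C n : nat) : nat := ((n + C) ^ 3)%N.

Definition inV (C : nat) (x : nat * nat) : Prop := (x.2 <= lcomb C x.1)%N.

Definition comb_adj (C : nat) (x y : nat * nat) : Prop :=
  inV C x /\ inV C y /\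
  ((x.2 = 0%N /\ y.2 = 0%N /\ (y.1 = x.1.+1 \/ x.1 = y.1.+1)) \/
   (x.1 = y.1 /\ (y.2 = x.2.+1 \/ x.2 = y.2.+1))).

Definition inf_laplacian (R : realType) (C : nat) (w : nat * nat -> R)
  (x : nat * nat) : R :=
  inf [set w y | y in [set y | comb_adj C x y]]
  + sup [set w y | y in [set y | comb_adj C x y]] - 2 * w x.

Definition fcomb (R : realType) (C : nat) (x : nat * nat) : R :=
  if x.2 == 0%N then 1 / (lcomb C x.1)%:R else 0.

Definition tailS (R : realType) (C n : nat) : R :=
  limn (fun N : nat => \sum_(n <= k < N) (1 / (lcomb C k)%:R : R)).

Fixpoint vbase (R : realType) (C n : nat) : R :=
  match n with
  | 0%N => (lcomb C 0)%:R * tailS R C 0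
  | m.+1 => vbase R C m + tailS R C m.+1
  end.

Definition vcomb (R : realType) (C : nat) (x : nat * nat) : R :=
  (((lcomb C x.1)%:R - (x.2)%:R) / (lcomb C x.1)%:R) * vbase R C x.1.

(* Main.v *)
Require Import Defs.
From HB Require Import structures.
From mathcomp Require Import all_boot all_order all_algebra.
From mathcomp Require Import all_classical all_reals all_analysis.
From mathcomp Require Import ring lra zify.
Import Order.TTheory GRing.Theory Num.Theory numFieldNormedType.Exports.
Local Open Scope ring_scope.
Local Open Scope classical_set_scope.

Lemma ineq_up (R : realType) (x : R) : 2 <= x ->
  1 / x ^+ 3 <= 1 / ((x - 1) * x) - 1 / (x * (x + 1)).
Proof.
move=> hx.
have x0 : x != 0 by apply/negP=> /eqP h; rewrite h in hx; lra.
have x1 : x - 1 != 0 by apply/negP=> /eqP h; lra.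
have x2 : x + 1 != 0 by apply/negP=> /eqP h; lra.
rewrite -subr_ge0.
have -> : 1 / ((x - 1) * x) - 1 / (x * (x + 1)) - 1 / x ^+ 3 =
   (x ^+ 2 + 1) / ((x - 1) * x ^+ 3 * (x + 1)) by field; rewrite ?x0 ?x1 ?x2.
apply: divr_ge0; first nra.
apply: mulr_ge0; [apply: mulr_ge0|]; [lra| |lra].
by apply: exprn_ge0; lra.
Qed.

Lemma ineq_lo (R : realType) (x : R) : 1 <= x ->
  1 / (2 * x * (x + 1)) - 1 / (2 * (x + 1) * (x + 1 + 1)) <= 1 / x ^+ 3.
Proof.
move=> hx.
have x0 : x != 0 by apply/negP=> /eqP h; rewrite h in hx; lra.
have x2 : x + 1 != 0 by apply/negP=> /eqP h; lra.
have x3 : x + 1 + 1 != 0 by apply/negP=> /eqP h; lra.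
rewrite -subr_ge0.
have -> : 1 / x ^+ 3 - (1 / (2 * x * (x + 1)) - 1 / (2 * (x + 1) * (x + 1 + 1))) =
   (3 * x + 2) / (x ^+ 3 * (x + 1) * (x + 1 + 1)) by field; rewrite ?x0 ?x2 ?x3.
apply: divr_ge0; first lra.
apply: mulr_ge0; [apply: mulr_ge0|]; [|lra|lra].
by apply: exprn_ge0; lra.
Qed.

Lemma ineq_key (R : realType) (y : R) : 8 <= y ->
  1 <= (y ^+ 3 - (y - 1) ^+ 3 - 1) *
       (1 / (2 * y * (y + 1)) - 1 / (2 * (3 * y) * (3 * y + 1))).
Proof.
move=> hy.
have y0 : y != 0 by apply/negP=> /eqP h; rewrite h in hy; lra.
have y2 : y + 1 != 0 by apply/negP=> /eqP h; lra.
have y3 : 3 * y + 1 != 0 by apply/negP=> /eqP h; lra.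
rewrite -subr_ge0.
have -> : (y ^+ 3 - (y - 1) ^+ 3 - 1) *
       (1 / (2 * y * (y + 1)) - 1 / (2 * (3 * y) * (3 * y + 1))) - 1 =
   (y ^+ 2 - 7 * y - 2) / ((y + 1) * (3 * y + 1)) by field; rewrite ?y0 ?y2 ?y3.
apply: divr_ge0; first nra.
apply: mulr_ge0; lra.
Qed.
Definition sN (R : realType) (C n N : nat) : R :=
  \sum_(n <= k < N) (1 / (lcomb C k)%:R : R).

Lemma tele_le (R : realType) (g h : nat -> R) (n N : nat) : (n <= N)%N ->
  (forall k, g k <= h k - h k.+1) -> \sum_(n <= k < N) g k <= h n - h N.
Proof.
move=> nN hg.
have -> : h n - h N = \sum_(n <= k < N) ((- h) k.+1 - (- h) k).
  by rewrite telescope_sumr //= opprK addrC.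
by apply: ler_sum => k _ /=; rewrite opprK addrC.
Qed.

Lemma tele_ge (R : realType) (g h : nat -> R) (n N : nat) : (n <= N)%N ->
  (forall k, h k - h k.+1 <= g k) -> h n - h N <= \sum_(n <= k < N) g k.
Proof.
move=> nN hg.
have -> : h n - h N = \sum_(n <= k < N) ((- h) k.+1 - (- h) k).
  by rewrite telescope_sumr //= opprK addrC.
by apply: ler_sum => k _ /=; rewrite opprK addrC.
Qed.

Lemma lcombE (R : realType) C k : (lcomb C k)%:R = ((k + C)%:R : R) ^+ 3.
Proof. by rewrite /lcomb natrX. Qed.

Lemma lcomb_gt0 (R : realType) C k : (0 < C)%N -> 0 < ((lcomb C k)%:R : R).
Proof. by move=> hC; rewrite ltr0n /lcomb expn_gt0 addn_gt0 hC orbT. Qed.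

Lemma sN_ge0 (R : realType) C n N : (0 < C)%N -> 0 <= sN R C n N.
Proof.
move=> hC; apply: sumr_ge0 => k _; apply: divr_ge0 => //; exact: ltW (lcomb_gt0 R k hC).
Qed.

Lemma sN_homo (R : realType) C n : (0 < C)%N ->
  {homo sN R C n : N M / (N <= M)%N >-> N <= M}.
Proof.
move=> hC N M NM; case: (leqP N n) => hn.
  by rewrite /sN big_geq //; apply: sN_ge0.
rewrite /sN (big_cat_nat (ltnW hn) NM) /= lerDl.
apply: sumr_ge0 => k _; apply: divr_ge0 => //; exact: ltW (lcomb_gt0 R k hC).
Qed.

Definition hU (R : realType) (C k : nat) : R :=
  1 / (((k + C)%:R - 1) * (k + C)%:R).

Lemma sN_ub (R : realType) C n N : (2 <= C)%N -> sN R C n N <= hU R C n.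
Proof.
move=> hC.
have hU0 : forall k, 0 <= hU R C k.
  move=> k; rewrite /hU; apply: divr_ge0 => //.
  have : (2%:R : R) <= (k + C)%:R by rewrite ler_nat; lia.
  move=> h; apply: mulr_ge0; lra.
case: (leqP n N) => hn; last by rewrite /sN big_geq ?hU0 //; apply: ltnW.
apply: le_trans (@tele_le R _ (hU R C) n N hn _) _; last by rewrite lerBlDr lerDl hU0.
move=> k; rewrite lcombE /hU.
have -> : (k.+1 + C)%:R = ((k + C)%:R : R) + 1 by rewrite addSn -addn1 natrD.
rewrite addrK.
apply: ineq_up.
have : (2%:R : R) <= (k + C)%:R by rewrite ler_nat; lia.
by [].
Qed.
Lemma sN_cvg (R : realType) C n : (2 <= C)%N -> cvgn (sN R C n).
Proof.
move=> hC; apply: nondecreasing_is_cvgn; first by apply: sN_homo; lia.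
by exists (hU R C n) => _ [N _ <-]; exact: (sN_ub R C n N hC).
Qed.

Lemma tailSE (R : realType) C n : tailS R C n = limn (sN R C n).
Proof. by []. Qed.

Lemma tailS_ge (R : realType) C n N : (2 <= C)%N -> sN R C n N <= tailS R C n.
Proof.
move=> hC; rewrite tailSE; apply: nondecreasing_cvgn_le; last exact: sN_cvg.
by apply: sN_homo; lia.
Qed.

Lemma tailS_le (R : realType) C n : (2 <= C)%N -> tailS R C n <= hU R C n.
Proof.
move=> hC; rewrite tailSE; apply: limr_le; first exact: sN_cvg.
by apply: nearW => N; exact: (sN_ub R C n N hC).
Qed.

Lemma tailS_ge0 (R : realType) C n : (2 <= C)%N -> 0 <= tailS R C n.
Proof.
move=> hC; apply: le_trans (tailS_ge R C n 0 hC); apply: sN_ge0; by apply: leq_trans hC.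
Qed.

Lemma tailS_rec (R : realType) C n : (2 <= C)%N ->
  tailS R C n = 1 / (lcomb C n)%:R + tailS R C n.+1.
Proof.
move=> hC.
have h1 : sN R C n.+1 @ \oo --> tailS R C n.+1 := sN_cvg R C n.+1 hC.
have h2 : (fun N => 1 / (lcomb C n)%:R + sN R C n.+1 N) @ \oo -->
           1 / (lcomb C n)%:R + tailS R C n.+1.
  by apply: cvgD => //; exact: cvg_cst.
have h3 : sN R C n @ \oo --> 1 / (lcomb C n)%:R + tailS R C n.+1.
  apply: cvg_trans h2; apply: near_eq_cvg; near=> N.
  rewrite /sN [RHS]big_ltn //.
  near: N; exists n.+1 => // N /=; lia.
by apply: (cvg_lim _ h3).
Unshelve. all: by end_near.
Qed.

Definition hL (R : realType) (C k : nat) : R :=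
  1 / (2 * (k + C)%:R * ((k + C)%:R + 1)).

Lemma natS_R (R : realType) k C : ((k.+1 + C)%:R : R) = (k + C)%:R + 1.
Proof. by rewrite addSn -addn1 natrD. Qed.

Lemma tailS_lo (R : realType) C n : (2 <= C)%N ->
  hL R C n - hL R C (3 * n + 2 * C) <= tailS R C n.
Proof.
move=> hC; apply: le_trans _ (tailS_ge R C n (3 * n + 2 * C) hC).
apply: tele_ge; first lia.
move=> k; rewrite lcombE /hL natS_R; apply: ineq_lo.
have : (1%:R : R) <= (k + C)%:R by rewrite ler_nat; lia.
by [].
Qed.

Lemma key_ineq (R : realType) C n : (7 <= C)%N ->
  1 <= ((lcomb C n.+1)%:R - (lcomb C n)%:R - 1) * tailS R C n.+1.
Proof.
move=> hC.
set y : R := (n.+1 + C)%:R.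
have hy : 8 <= y.
  have : (8%:R : R) <= y by rewrite /y ler_nat; lia.
  by [].
have e1 : (lcomb C n.+1)%:R = y ^+ 3 by rewrite lcombE.
have e0 : (lcomb C n)%:R = (y - 1) ^+ 3 by rewrite lcombE /y natS_R addrK.
have hlo := tailS_lo R C n.+1 (leq_trans (isT : (2 <= 7)%N) hC).
have e2 : hL R C n.+1 = 1 / (2 * y * (y + 1)) by [].
have e3 : hL R C (3 * n.+1 + 2 * C) = 1 / (2 * (3 * y) * (3 * y + 1)).
  rewrite /hL; have -> : (3 * n.+1 + 2 * C + C = 3 * (n.+1 + C))%N by lia.
  by rewrite natrM.
rewrite e2 e3 in hlo.
apply: le_trans (@ineq_key R y hy) _.
rewrite e1 e0; apply: ler_wpM2l => //.
have : (y - 1) ^+ 3 + 1 <= y ^+ 3 by nra.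
lra.
Qed.

Lemma vbase_ge0 (R : realType) C n : (2 <= C)%N -> 0 <= vbase R C n.
Proof.
move=> hC; elim: n => [|n IH] /=.
  by apply: mulr_ge0; [exact: ler0n | exact: tailS_ge0].
by apply: addr_ge0 => //; exact: tailS_ge0.
Qed.

Lemma vbase_le (R : realType) C n : (7 <= C)%N ->
  vbase R C n <= (lcomb C n)%:R * tailS R C n.
Proof.
move=> hC; have hC2 : (2 <= C)%N by lia.
elim: n => [|n IH] /=; first by [].
have key := key_ineq R C n hC.
have rec := tailS_rec R C n hC2.
have L0 : 0 < ((lcomb C n)%:R : R) by apply: lcomb_gt0; lia.
have e : (lcomb C n)%:R * tailS R C n = 1 + (lcomb C n)%:R * tailS R C n.+1.
  rewrite rec mulrDr; congr (_ + _); field; exact: lt0r_neq0.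
rewrite e in IH.
nra.
Qed.

Lemma vbase_bd (R : realType) C n : (2 <= C)%N ->
  vbase R C n <= vbase R C 0 + 1 - 1 / (n + C)%:R.
Proof.
move=> hC; elim: n => [|n IH].
  have h1 : (1 : R) <= C%:R by rewrite (_ : 1 = 1%:R) // ler_nat; lia.
  rewrite add0n /= -addrA lerDl subr_ge0 ler_pdivrMr; lra.
rewrite /=.
have hu := tailS_le R C n.+1 hC.
have hx : (1 : R) <= (n + C)%:R by rewrite (_ : 1 = 1%:R) // ler_nat; lia.
have e : hU R C n.+1 = 1 / (n + C)%:R - 1 / ((n + C)%:R + 1).
  rewrite /hU natS_R addrK.
  move: hx; set x : R := (n + C)%:R; clearbody x => hx.
  have x0 : x != 0 by apply/negP=> /eqP h; rewrite h in hx; lra.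
  have x1 : x + 1 != 0 by apply/negP=> /eqP h; lra.
  by field; rewrite ?x0 ?x1.
rewrite e in hu.
rewrite natS_R.
move: IH => /= IH.
lra.
Qed.

Lemma lap_eval (R : realType) C (w : nat * nat -> R) x y1 y2 :
  comb_adj C x y1 -> comb_adj C x y2 ->
  (forall y, comb_adj C x y -> w y1 <= w y <= w y2) ->
  inf_laplacian R C w x = w y1 + w y2 - 2 * w x.
Proof.
move=> a1 a2 hb; rewrite /inf_laplacian.
set S := [set w y | y in [set y | comb_adj C x y]].
have hS1 : S (w y1) by exists y1.
have hS2 : S (w y2) by exists y2.
have hz : forall z, S z -> w y1 <= z <= w y2 by move=> z [y hy <-]; exact: hb.
have ub : ubound S (w y2) by move=> z /hz /andP[].
have lb : lbound S (w y1) by move=> z /hz /andP[].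
have -> : sup S = w y2.
  apply/eqP; rewrite eq_le; apply/andP; split.
    by apply: ge_sup => //; exists (w y1).
  by apply: sup_upper_bound => //; split; [exists (w y1) | exists (w y2)].
have -> : inf S = w y1.
  apply/eqP; rewrite eq_le; apply/andP; split.
    by apply: ge_inf => //; exists (w y1).
  by apply: lb_le_inf => //; exists (w y1).
by [].
Qed.

Lemma vE (R : realType) C n q : (0 < C)%N ->
  vcomb R C (n, q) = vbase R C n - q%:R * (vbase R C n / (lcomb C n)%:R).
Proof.
move=> hC; rewrite /vcomb /=.
have L0 := lcomb_gt0 R C n hC.
move: L0; set L : R := (lcomb C n)%:R; clearbody L => L0.
by field; exact: lt0r_neq0.
Qed.

Lemma vE0 (R : realType) C n : (0 < C)%N -> vcomb R C (n, 0%N) = vbase R C n.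
Proof. by move=> hC; rewrite vE // mul0r subr0. Qed.

Local Close Scope classical_set_scope.

Theorem proposition4p5 :
  exists C0 : nat, forall C : nat, (0 < C)%N -> (C0 <= C)%N ->
  forall R : realType,
    (exists M : R, forall x, inV C x -> `|vcomb R C x| <= M) /\
    (forall x, inV C x -> (x.2 < lcomb C x.1)%N ->
        inf_laplacian R C (vcomb R C) x = - fcomb R C x) /\
    (forall x, inV C x -> x.2 = lcomb C x.1 -> vcomb R C x = 0).
Proof.
exists 8%N => C hC0 hC R.
have hC2 : (2 <= C)%N by lia.
have hC7 : (7 <= C)%N by lia.
split; [|split].
- exists (vbase R C 0 + 1) => -[n l] hl; rewrite /inV /= in hl.
  rewrite vE //.
  have a0 := vbase_ge0 R C n hC2.
  have ab := vbase_bd R C n hC2.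
  have L0 := lcomb_gt0 R C n hC0.
  have hlL : (l%:R : R) <= (lcomb C n)%:R by rewrite ler_nat.
  have hpos : 0 < ((n + C)%:R : R) by rewrite ltr0n; lia.
  have i0 : 0 <= 1 / ((n + C)%:R : R) by apply: divr_ge0 => //; exact: ltW.
  have k0 : (0 : R) <= l%:R by exact: ler0n.
  move: a0 ab L0 hlL i0 k0.
  set a := vbase R C n; set L : R := (lcomb C n)%:R; set b := vbase R C 0.
  set k : R := l%:R; set i := 1 / _.
  clearbody a L b k i => a0 ab L0 hlL i0 k0.
  have e : a - k * (a / L) = a * ((L - k) / L) by field; exact: lt0r_neq0.
  have r0 : 0 <= (L - k) / L by apply: divr_ge0; lra.
  have r1 : (L - k) / L <= 1 by rewrite ler_pdivrMr // mul1r; lra.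
  rewrite e ger0_norm; last exact: mulr_ge0.
  have h1 : 0 <= a * (1 - (L - k) / L) by apply: mulr_ge0; lra.
  move: h1; rewrite mulrBr mulr1 => h1.
  lra.
- move=> -[n l]; rewrite /inV /= => _ hl.
  case: l hl => [|l] hl.
  + case: n hl => [|m] hl.
    * have a1 : comb_adj C (0%N, 0%N) (0%N, 1%N) by rewrite /comb_adj /inV /=; lia.
      have a2 : comb_adj C (0%N, 0%N) (1%N, 0%N) by rewrite /comb_adj /inV /=; lia.
      have L0 := lcomb_gt0 R C 0 hC0.
      have T1 := tailS_ge0 R C 1 hC2.
      have rec := tailS_rec R C 0 hC2.
      have v0 : vbase R C 0 = (lcomb C 0)%:R * tailS R C 0 by [].
      have v1 : vbase R C 1 = vbase R C 0 + tailS R C 1 by [].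
      have d0 : vbase R C 0 / (lcomb C 0)%:R = tailS R C 0.
        by rewrite v0 mulrC mulKf //; exact: lt0r_neq0.
      have f0 : fcomb R C (0%N, 0%N) = 1 / (lcomb C 0)%:R by [].
      rewrite f0 (@lap_eval R C (vcomb R C) _ _ _ a1 a2).
        rewrite !vE0 // vE // d0 v1 mul1r rec; lra.
      move=> -[p q]; rewrite /comb_adj /inV /= => -[_ [hq H]].
      have : ((p = 0 /\ q = 1) \/ (p = 1 /\ q = 0))%N by lia.
      have i0 : 0 <= 1 / ((lcomb C 0)%:R : R) by apply: divr_ge0 => //; exact: ltW.
      case=> -[-> ->]; rewrite ?vE0 // ?vE // d0 v1 mul1r rec; apply/andP; split; lra.
    * have a1 : comb_adj C (m.+1, 0%N) (m, 0%N) by rewrite /comb_adj /inV /=; lia.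
      have a2 : comb_adj C (m.+1, 0%N) (m.+2, 0%N) by rewrite /comb_adj /inV /=; lia.
      have L0 := lcomb_gt0 R C m.+1 hC0.
      have T1 := tailS_ge0 R C m.+2 hC2.
      have rec := tailS_rec R C m.+1 hC2.
      have vl := vbase_le R C m.+1 hC7.
      have v1 : vbase R C m.+1 = vbase R C m + tailS R C m.+1 by [].
      have v2 : vbase R C m.+2 = vbase R C m.+1 + tailS R C m.+2 by [].
      have d0 : vbase R C m.+1 / (lcomb C m.+1)%:R <= tailS R C m.+1.
        by rewrite ler_pdivrMr // mulrC.
      have dd : 0 <= vbase R C m.+1 / (lcomb C m.+1)%:R.
        by apply: divr_ge0; [exact: vbase_ge0 | exact: ltW].
      have f0 : fcomb R C (m.+1, 0%N) = 1 / (lcomb C m.+1)%:R by [].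
      rewrite f0 (@lap_eval R C (vcomb R C) _ _ _ a1 a2).
        rewrite !vE0 // v2 v1 rec; lra.
      move=> -[p q]; rewrite /comb_adj /inV /= => -[_ [hq H]].
      have : ((p = m /\ q = 0) \/ (p = m.+2 /\ q = 0) \/ (p = m.+1 /\ q = 1))%N by lia.
      have T0 := tailS_ge0 R C m.+1 hC2.
      rewrite v1 in d0 dd.
      case=> [|[]] [-> ->]; rewrite ?vE0 // ?vE // ?mul1r v2 ?v1; apply/andP; split; lra.
  + have a1 : comb_adj C (n, l.+1) (n, l.+2) by rewrite /comb_adj /inV /=; lia.
    have a2 : comb_adj C (n, l.+1) (n, l) by rewrite /comb_adj /inV /=; lia.
    have dd : 0 <= vbase R C n / (lcomb C n)%:R.
      by apply: divr_ge0; [exact: vbase_ge0 | exact: ltW (lcomb_gt0 R C n hC0)].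
    have f0 : fcomb R C (n, l.+1) = 0 by [].
    have c2 : (l.+2%:R : R) = l%:R + 2 by rewrite -addn2 natrD.
    have c1 : (l.+1%:R : R) = l%:R + 1 by rewrite -addn1 natrD.
    have l0 : (0 : R) <= l%:R by exact: ler0n.
    rewrite f0 (@lap_eval R C (vcomb R C) _ _ _ a1 a2).
      rewrite !vE // c1 c2 oppr0; ring.
    move=> -[p q]; rewrite /comb_adj /inV /= => -[_ [hq H]].
    have : ((p = n /\ q = l.+2) \/ (p = n /\ q = l))%N by lia.
    case=> -[-> ->]; rewrite !vE // ?c1 ?c2; apply/andP; split; nra.
- move=> -[n l]; rewrite /inV /= => _ ->.
  by rewrite /vcomb /= subrr mul0r mul0r.
Qed.
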